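(* Let $n\geq 1$ and $x^s\in\mathbb{C}^n\setminus\{0\}$. Define $g:\mathbb{C}^n\to\mathbb{R}$ by $$g(x)=\|x\|^4-\|x\|^2\|x^s\|^2-|\langle x,x^s\rangle|^2+\|x^s\|^4,$$ viewed as a smooth function of the $2n$ real coordinates of $x$ (identifying $\mathbb{C}^n$ with $\mathbb{R}^{2n}$). Then: (i) the set of points $x$ with $\nabla g(x)=0$ is exactly $E_1\cup E_2\cup E_3$, where $E_1=\{e^{i\theta}x^s:\theta\in\mathbb{R}\}$, $E_2=\{0\}$, and $E_3=\{x\in\mathbb{C}^n:\langle x^s,x\rangle=0,\ \|x\|=\|x^s\|/\sqrt{2}\}$; (ii) the set of points $x$ with $\nabla g(x)=0$ and $\nabla^2 g(x)\succeq 0$ (real Hessian positive semidefinite) is exactly $E_1$. In particular, $\nabla^2 g(0)\prec 0$ and, for every $x\in E_3$, the second derivative of $g$ at $x$ in the direction $x^s$ equals $-2\|x^s\|^4<0$.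
   Context: $\langle u,v\rangle=\sum_i \overline{u_i}v_i$ denotes the standard Hermitian product on $\mathbb{C}^n$ and $\|\cdot\|$ the associated Euclidean norm. (In the paper, $g$ is the expectation of the phase-retrieval loss $f(x)=\frac{1}{2m}\sum_{k=1}^m(|\langle x,v_k\rangle|^2-|\langle x^s,v_k\rangle|^2)^2$ over independent standard complex Gaussian measurement vectors $v_k$.) *)

(* Defs.v *)
From HB Require Import structures.
From mathcomp Require Import all_boot all_order all_algebra.
From mathcomp Require Import all_classical all_reals all_analysis.
From mathcomp Require Import complex.
Set Implicit Arguments. Unset Strict Implicit. Unset Printing Implicit Defensive.
Import Order.TTheory GRing.Theory Num.Theory.
Import numFieldNormedType.Exports.
Local Open Scope ring_scope.
Local Open Scope complex_scope.

Section Defs.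
Variable R : realType.
Variable n : nat.

Definition hprod (u v : 'rV[R[i]]_n) : R[i] := \sum_(j < n) (u 0 j)^* * v 0 j.

Definition cabs (z : R[i]) : R := Num.sqrt (complex.Re z ^+ 2 + complex.Im z ^+ 2).

Definition cnorm (x : 'rV[R[i]]_n) : R := Num.sqrt (complex.Re (hprod x x)).

Definition expi (t : R) : R[i] := cos t +i* sin t.

Definition gfun (xs x : 'rV[R[i]]_n) : R :=
  cnorm x ^+ 4 - cnorm x ^+ 2 * cnorm xs ^+ 2 - cabs (hprod x xs) ^+ 2
  + cnorm xs ^+ 4.

(* identification R^{2n} = C^n : first n coordinates = real parts,
   last n coordinates = imaginary parts *)
Definition toC (y : 'rV[R]_(n + n)) : 'rV[R[i]]_n :=
  \row_j (y 0 (lshift n j) +i* y 0 (rshift n j)).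
Definition ofC (x : 'rV[R[i]]_n) : 'rV[R]_(n + n) :=
  \row_k (match @fintype.split n n k with
          | inl j => complex.Re (x 0 j)
          | inr j => complex.Im (x 0 j) end).

Definition greal (xs : 'rV[R[i]]_n) (y : 'rV[R]_(n + n)) : R := gfun xs (toC y).

Definition ebasis (k : 'I_(n + n)) : 'rV[R]_(n + n) := delta_mx 0 k.

Definition gradient (f : 'rV[R]_(n + n) -> R) (y : 'rV[R]_(n + n)) : 'rV[R]_(n + n) :=
  \row_k ('D_(ebasis k) f y).
Definition hessian (f : 'rV[R]_(n + n) -> R) (y : 'rV[R]_(n + n)) : 'M[R]_(n + n) :=
  \matrix_(k, l) ('D_(ebasis k) (fun z => 'D_(ebasis l) f z) y).

Definition psd (H : 'M[R]_(n + n)) : Prop :=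
  forall v : 'rV[R]_(n + n), 0 <= (v *m H *m v^T) 0 0.
Definition negdef (H : 'M[R]_(n + n)) : Prop :=
  forall v : 'rV[R]_(n + n), v != 0 -> (v *m H *m v^T) 0 0 < 0.

Definition E1 (xs : 'rV[R[i]]_n) : set 'rV[R[i]]_n :=
  [set x | exists t : R, x = expi t *: xs].
Definition E2 : set 'rV[R[i]]_n := [set 0].
Definition E3 (xs : 'rV[R[i]]_n) : set 'rV[R[i]]_n :=
  [set x | hprod xs x = 0 /\ cnorm x = cnorm xs / Num.sqrt 2].

End Defs.

(* Main.v *)
Require Import Defs.
From HB Require Import structures.
From mathcomp Require Import all_boot all_order all_algebra.
From mathcomp Require Import all_classical all_reals all_analysis.
From mathcomp Require Import complex.
From mathcomp Require Import ring lra.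
Import Order.TTheory GRing.Theory Num.Theory.
Import numFieldNormedType.Exports.
Local Open Scope classical_set_scope.
Local Open Scope ring_scope.
Set Implicit Arguments. Unset Strict Implicit.

Lemma derive_poly (R : realType) (V : normedModType R) (f : V -> R) (y v : V)
  (c1 c2 c3 c4 : R) :
  (forall h : R, f (h *: v + y) = f y + h * c1 + h^+2 * c2 + h^+3 * c3 + h^+4 * c4) ->
  'D_v f y = c1.
Proof.
move=> Hf; rewrite /derive; apply: cvg_lim => //.
set p := fun h : R => c1 + h * (c2 + h * (c3 + h * c4)).
have Hp : p @ 0 --> c1.
  have -> : c1 = c1 + 0 * (c2 + 0 * (c3 + 0 * c4)) by rewrite !mul0r addr0.
  apply: cvgD; first exact: cvg_cst.
  apply: cvgM; first exact: cvg_id.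
  apply: cvgD; first exact: cvg_cst.
  apply: cvgM; first exact: cvg_id.
  apply: cvgD; first exact: cvg_cst.
  apply: cvgM; first exact: cvg_id.
  exact: cvg_cst.
have Hp' : p @ 0^' --> c1 by apply: cvg_within_filter.
apply: cvg_trans Hp'; apply: near_eq_cvg; near=> h.
have hn0 : h != 0 by near: h; exact: nbhs_dnbhs_neq.
rewrite /p /= Hf /=.
rewrite [X in X *: _]/= /GRing.scale /=.
field; exact: hn0.
Unshelve. all: by end_near.
Qed.

Section S.
Variable R : realType.
Variable n : nat.
Local Notation V := 'rV[R]_(n + n).
Local Notation C := 'rV[R[i]]_n.

Definition dot (u w : V) : R := \sum_k u 0 k * w 0 k.

Lemma splitL (j : 'I_n) : fintype.split (lshift n j) = inl j.
Proof. exact: (@unsplitK n n (inl j)). Qed.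
Lemma splitR (j : 'I_n) : fintype.split (rshift n j) = inr j.
Proof. exact: (@unsplitK n n (inr j)). Qed.

Lemma dot_split (u w : V) : dot u w =
  \sum_(j < n) (u 0 (lshift n j) * w 0 (lshift n j) + u 0 (rshift n j) * w 0 (rshift n j)).
Proof. by rewrite /dot big_split_ord /= -big_split. Qed.

Lemma ofCK (y : V) : ofC (toC y) = y.
Proof.
apply/rowP => k; rewrite !mxE; case: splitP => j /= Hj; rewrite mxE /=.
  by congr (y 0 _); apply/val_inj.
by congr (y 0 _); apply/val_inj.
Qed.

Lemma toCK (x : C) : toC (ofC x) = x.
Proof.
apply/rowP => j; rewrite !mxE splitL splitR.
by case: (x 0 j).
Qed.

Lemma Re_sum (I : Type) (r : seq I) (F : I -> R[i]) :
  complex.Re (\sum_(i <- r) F i) = \sum_(i <- r) complex.Re (F i).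
Proof. elim/big_rec2: _ => // i a b _ <-; by case: (F i); case: b. Qed.
Lemma Im_sum (I : Type) (r : seq I) (F : I -> R[i]) :
  complex.Im (\sum_(i <- r) F i) = \sum_(i <- r) complex.Im (F i).
Proof. elim/big_rec2: _ => // i a b _ <-; by case: (F i); case: b. Qed.

Definition bvec (x : C) : V := \row_k (match fintype.split k with
          | inl j => complex.Im (x 0 j)
          | inr j => - complex.Re (x 0 j) end).

Lemma Re_hprod (y : V) (w : C) : complex.Re (hprod (toC y) w) = dot y (ofC w).
Proof.
rewrite /hprod Re_sum dot_split; apply: eq_bigr => j _.
rewrite !mxE splitL splitR; case: (w 0 j) => a b /=. ring.
Qed.

Lemma Im_hprod (y : V) (w : C) : complex.Im (hprod (toC y) w) = dot y (bvec w).
Proof.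
rewrite /hprod Im_sum dot_split; apply: eq_bigr => j _.
rewrite !mxE splitL splitR; case: (w 0 j) => a b /=. ring.
Qed.

Lemma dotC (u w : V) : dot u w = dot w u.
Proof. by apply: eq_bigr => k _; rewrite mulrC. Qed.
Lemma dotDl (u v w : V) : dot (u + v) w = dot u w + dot v w.
Proof. by rewrite /dot -big_split; apply: eq_bigr => k _; rewrite mxE mulrDl. Qed.
Lemma dotZl (c : R) (u w : V) : dot (c *: u) w = c * dot u w.
Proof. by rewrite /dot mulr_sumr; apply: eq_bigr => k _; rewrite mxE mulrA. Qed.
Lemma dotDr (u v w : V) : dot w (u + v) = dot w u + dot w v.
Proof. by rewrite dotC dotDl !(dotC w). Qed.
Lemma dotZr (c : R) (u w : V) : dot w (c *: u) = c * dot w u.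
Proof. by rewrite dotC dotZl dotC. Qed.
Lemma dotNl (u w : V) : dot (- u) w = - dot u w.
Proof. by rewrite -scaleN1r dotZl mulN1r. Qed.
Lemma dotNr (u w : V) : dot w (- u) = - dot w u.
Proof. by rewrite -scaleN1r dotZr mulN1r. Qed.
Lemma dot0l (w : V) : dot 0 w = 0.
Proof. by rewrite /dot big1 // => k _; rewrite mxE mul0r. Qed.
Lemma dot_ge0 (u : V) : 0 <= dot u u.
Proof. by apply: sumr_ge0 => k _; rewrite -expr2 sqr_ge0. Qed.
Lemma dot_eq0 (u : V) : dot u u = 0 -> u = 0.
Proof.
move=> /eqP; rewrite psumr_eq0 => [/allP H|k _]; last by rewrite -expr2 sqr_ge0.
apply/rowP => k; rewrite mxE; have := H k (mem_index_enum k).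
by rewrite /= mulf_eq0 orbb => /eqP.
Qed.
Lemma dot_er (w : V) k : dot w (ebasis R k) = w 0 k.
Proof.
rewrite /dot (bigD1 k) //= big1 ?addr0 => [|j /negPf hj]; rewrite !mxE ?eqxx ?mulr1 //.
by rewrite hj mulr0.
Qed.
Lemma dot_el (w : V) k : dot (ebasis R k) w = w 0 k.
Proof. by rewrite dotC dot_er. Qed.

Definition Gf (a b y : V) : R :=
  (dot y y)^+2 - dot y y * dot a a - (dot y a ^+2 + dot y b ^+2) + (dot a a)^+2.
Definition DG (a b y w : V) : R :=
  4 * dot y y * dot y w - 2 * dot a a * dot y w - 2 * dot y a * dot w a
  - 2 * dot y b * dot w b.
Definition D2 (a b y u w : V) : R :=
  8 * dot y u * dot y w + 4 * dot y y * dot u w - 2 * dot a a * dot u w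
  - 2 * dot u a * dot w a - 2 * dot u b * dot w b.

Ltac dotexp := rewrite ?(dotDl, dotDr, dotZl, dotZr, dotNl, dotNr).

Lemma DG_ok (a b y w : V) : 'D_w (Gf a b) y = DG a b y w.
Proof.
apply: (@derive_poly _ _ _ _ _ _
  (4 * dot y w ^+2 + 2 * dot y y * dot w w - dot a a * dot w w - dot w a ^+2 - dot w b ^+2)
  (4 * dot y w * dot w w) (dot w w ^+2)) => h.
rewrite /Gf /DG; dotexp; rewrite (dotC w y); ring.
Qed.

Lemma D2_ok (a b y u w : V) : 'D_u (fun z => DG a b z w) y = D2 a b y u w.
Proof.
apply: (@derive_poly _ _ _ _ _ _
  (4 * (2 * dot y u * dot u w + dot u u * dot y w)) (4 * dot u u * dot u w) 0) => h.
rewrite /DG /D2; dotexp; rewrite (dotC u y); ring.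
Qed.

Lemma D2_sym (a b y u w : V) : D2 a b y u w = D2 a b y w u.
Proof. rewrite /D2 (dotC u w); ring. Qed.

Definition Lv (a b y w : V) : V :=
  (8 * dot y w) *: y + (4 * dot y y - 2 * dot a a) *: w - (2 * dot w a) *: a
  - (2 * dot w b) *: b.

Lemma D2_dot (a b y u w : V) : D2 a b y u w = dot u (Lv a b y w).
Proof. rewrite /D2 /Lv; dotexp; rewrite !(dotC u); ring. Qed.

Lemma quadform (M : 'M[R]_(n + n)) (v : V) :
  (v *m M *m v^T) 0 0 = \sum_k \sum_l v 0 k * M k l * v 0 l.
Proof.
rewrite mxE; under eq_bigr => l _ do rewrite mxE mulr_suml.
rewrite exchange_big /=; apply: eq_bigr => k _; apply: eq_bigr => l _.
by rewrite mxE.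
Qed.

Lemma quad_D2 (a b y v : V) :
  (v *m (\matrix_(k, l) D2 a b y (ebasis R k) (ebasis R l)) *m v^T) 0 0 = D2 a b y v v.
Proof.
rewrite quadform.
transitivity (\sum_k v 0 k * D2 a b y v (ebasis R k)).
  apply: eq_bigr => k _.
  rewrite D2_dot /dot mulr_sumr; apply: eq_bigr => l _.
  rewrite mxE D2_sym D2_dot dot_el; ring.
rewrite [RHS]D2_dot /dot; apply: eq_bigr => k _.
by rewrite D2_sym D2_dot dot_el.
Qed.

Definition Wv (a b y : V) : V :=
  (4 * dot y y - 2 * dot a a) *: y - (2 * dot y a) *: a - (2 * dot y b) *: b.

Lemma crit_char (a b y : V) (hab : dot a b = 0) (hbb : dot b b = dot a a)
  (hS : 0 < dot a a) :
  Wv a b y = 0 <-> (y = 0 \/ (dot y a = 0 /\ dot y b = 0 /\ 2 * dot y y = dot a a)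
     \/ exists c d : R, c^+2 + d^+2 = 1 /\ y = c *: a + d *: b).
Proof.
have hba : dot b a = 0 by rewrite dotC.
have hS0 : dot a a != 0 by rewrite gt_eqF.
split.
- move=> HW.
  have e1 := congr1 (fun z => dot z a) HW; rewrite /= dot0l /Wv in e1.
  have e2 := congr1 (fun z => dot z b) HW; rewrite /= dot0l /Wv in e2.
  have e3 := congr1 (fun z => dot z y) HW; rewrite /= dot0l /Wv in e3.
  move: e1 e2 e3; dotexp; rewrite hab hba hbb (dotC a y) (dotC b y) => e1 e2 e3.
  have [hAS|hAS] := eqVneq (dot y y) (dot a a).
  + right; right.
    exists (dot y a / dot a a), (dot y b / dot a a); split.
      have h : dot y a ^+ 2 + dot y b ^+ 2 = dot a a ^+ 2.
        rewrite hAS in e3; nra.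
      by rewrite !expr_div_n -mulrDl h divff // expf_neq0.
    have h2S : 2 * dot a a != 0 by rewrite mulf_neq0 // pnatr_eq0.
    apply: (scalerI h2S).
    move: HW; rewrite /Wv hAS => /eqP; rewrite subr_eq0 subr_eq => /eqP.
    have -> : 4 * dot a a - 2 * dot a a = 2 * dot a a by ring.
    move=> ->.
    rewrite scalerDr !scalerA [LHS]addrC; congr (_ *: _ + _ *: _).
      field; exact: hS0.
    field; exact: hS0.
  + have hP : dot y a = 0.
      have : dot y a * (4 * (dot y y - dot a a)) = 0 by rewrite -e1; ring.
      move/eqP; rewrite mulf_eq0 => /orP[/eqP //|].
      by rewrite mulf_eq0 pnatr_eq0 /= subr_eq0 (negPf hAS).
    have hP2 : dot y b = 0.
      have : dot y b * (4 * (dot y y - dot a a)) = 0 by rewrite -e2; ring.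
      move/eqP; rewrite mulf_eq0 => /orP[/eqP //|].
      by rewrite mulf_eq0 pnatr_eq0 /= subr_eq0 (negPf hAS).
    move: HW; rewrite /Wv hP hP2 !mulr0 !scale0r !subr0 => /eqP.
    rewrite scaler_eq0 => /orP[/eqP h|/eqP ->]; last by left.
    by right; left; split => //; split => //; lra.
- case=> [->|[[hP [hP2 hA]]|[c [d [hcd Hy]]]]].
  + by rewrite /Wv !dot0l !mulr0 !scale0r scaler0 !subr0.
  + rewrite /Wv hP hP2 !mulr0 !scale0r !subr0.
    have -> : 4 * dot y y - 2 * dot a a = 0 by lra.
    by rewrite scale0r.
  + have hA : dot y y = dot a a.
      rewrite Hy; dotexp; rewrite hab hba hbb.
      transitivity ((c^+2 + d^+2) * dot a a); first ring. by rewrite hcd mul1r.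
    have hP : dot y a = c * dot a a.
      by rewrite Hy; dotexp; rewrite hba mulr0 addr0.
    have hP2 : dot y b = d * dot a a.
      by rewrite Hy; dotexp; rewrite hab hbb mulr0 add0r.
    rewrite /Wv hA hP hP2 Hy scalerDr !scalerA.
    have -> : (4 * dot a a - 2 * dot a a) * c = 2 * (c * dot a a) by ring.
    have -> : (4 * dot a a - 2 * dot a a) * d = 2 * (d * dot a a) by ring.
    by rewrite [_ *: a + _]addrC addrK subrr.
Qed.

Lemma cos_sin_ex (c d : R) : c^+2 + d^+2 = 1 -> exists t : R, cos t = c /\ sin t = d.
Proof.
move=> h.
have hc : -1 <= c <= 1 by apply/andP; split; nra.
have hs : sin (acos c) = `|d|.
  by rewrite sin_acos // -sqrtr_sqr; congr Num.sqrt; lra.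
have hcos : cos (acos c) = c by rewrite acosK // in_itv /=.
have [hd|hd] := leP 0 d.
  by exists (acos c); rewrite hcos hs ger0_norm.
exists (- acos c); rewrite cosN sinN hcos hs ltr0_norm //; split => //.
by rewrite opprK.
Qed.

Lemma ofC_inj (x x' : C) : ofC x = ofC x' -> x = x'.
Proof. by move=> h; rewrite -(toCK x) h toCK. Qed.

Lemma ofC0 : ofC (0 : C) = 0.
Proof. by apply/rowP => k; rewrite !mxE; case: (fintype.split k) => j; rewrite mxE. Qed.

Lemma ofC_scale (z : R[i]) (x : C) :
  ofC (z *: x) = complex.Re z *: ofC x - complex.Im z *: bvec x.
Proof.
apply/rowP => k; rewrite !mxE; case: (fintype.split k) => j; rewrite !mxE;
  case: z => zr zi; case: (x 0 j) => xr xi /=; ring.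
Qed.

Lemma hab_ok (x : C) : dot (ofC x) (bvec x) = 0.
Proof.
rewrite dot_split big1 // => j _; rewrite !mxE splitL splitR; ring.
Qed.

Lemma hbb_ok (x : C) : dot (bvec x) (bvec x) = dot (ofC x) (ofC x).
Proof.
rewrite !dot_split; apply: eq_bigr => j _; rewrite !mxE splitL splitR; ring.
Qed.

Lemma cnorm_sq (x : C) : cnorm x ^+ 2 = dot (ofC x) (ofC x).
Proof.
have := Re_hprod (ofC x) x; rewrite toCK => h.
by rewrite /cnorm h sqr_sqrtr // dot_ge0.
Qed.

Lemma cnorm4 (x : C) : cnorm x ^+ 4 = (dot (ofC x) (ofC x)) ^+ 2.
Proof. by rewrite -cnorm_sq -exprM. Qed.

Lemma cabs_sq (z : R[i]) : cabs z ^+ 2 = complex.Re z ^+ 2 + complex.Im z ^+ 2.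
Proof. by rewrite /cabs sqr_sqrtr // addr_ge0 // sqr_ge0. Qed.

Lemma greal_Gf (xs : C) : greal xs = Gf (ofC xs) (bvec xs).
Proof.
apply: funext => y; rewrite /greal /gfun /Gf.
rewrite !cnorm4 !cnorm_sq cabs_sq Re_hprod Im_hprod ofCK.
by [].
Qed.

Lemma gradE (xs : C) (y : V) :
  gradient (greal xs) y = Wv (ofC xs) (bvec xs) y.
Proof.
apply/rowP => k; rewrite greal_Gf !mxE DG_ok /DG !dot_er !dot_el !mxE; ring.
Qed.

Lemma DGfun (a b : V) w : (fun z => 'D_w (Gf a b) z) = (fun z => DG a b z w).
Proof. by apply: funext => z; rewrite DG_ok. Qed.

Lemma hessE (xs : C) (y : V) :
  hessian (greal xs) y =
  \matrix_(k, l) D2 (ofC xs) (bvec xs) y (ebasis R k) (ebasis R l).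
Proof.
by apply/matrixP => k l; rewrite !mxE greal_Gf DGfun D2_ok.
Qed.

Lemma dir2 (xs : C) (y u : V) :
  'D_u (fun z => 'D_u (greal xs) z) y = D2 (ofC xs) (bvec xs) y u u.
Proof. by rewrite greal_Gf DGfun D2_ok. Qed.

Lemma conj_hprod (u v : C) : hprod u v = (hprod v u)^*%C.
Proof.
rewrite /hprod rmorph_sum; apply: eq_bigr => j _.
case: (u 0 j) => p q; case: (v 0 j) => r s. apply/eqP; rewrite eq_complex /=. apply/andP; split; apply/eqP; ring.
Qed.

Lemma complex_eq0 (z : R[i]) : z = 0 <-> complex.Re z = 0 /\ complex.Im z = 0.
Proof. by case: z => r s /=; split => [[-> ->]|[-> ->]]. Qed.


Lemma Re_hprod' (x w : C) : complex.Re (hprod x w) = dot (ofC x) (ofC w).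
Proof. by have := Re_hprod (ofC x) w; rewrite toCK. Qed.
Lemma Im_hprod' (x w : C) : complex.Im (hprod x w) = dot (ofC x) (bvec w).
Proof. by have := Im_hprod (ofC x) w; rewrite toCK. Qed.

Lemma hprod0_iff (xs x : C) : hprod xs x = 0 <->
  (dot (ofC x) (ofC xs) = 0 /\ dot (ofC x) (bvec xs) = 0).
Proof.
rewrite conj_hprod -Re_hprod' -Im_hprod' -complex_eq0.
split => [h|->]; last exact: conjc0.
by rewrite -(conjcK (hprod x xs)) h conjc0.
Qed.

Lemma e3_iff (xs x : C) :
  (dot (ofC x) (ofC xs) = 0 /\ dot (ofC x) (bvec xs) = 0 /\
    2 * dot (ofC x) (ofC x) = dot (ofC xs) (ofC xs)) <-> E3 xs x.
Proof.
rewrite /E3 /=.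
set s2 := (X in _ = cnorm xs / X).
have h2 : 0 < s2 by rewrite /s2 sqrtr_gt0 ltr0n.
have hs2 : s2 ^+ 2 = 2 by rewrite /s2 sqr_sqrtr // ler0n.
have key : cnorm x = cnorm xs / s2 <->
    2 * dot (ofC x) (ofC x) = dot (ofC xs) (ofC xs).
  have hx0 : 0 <= cnorm x := sqrtr_ge0 _.
  have hxs0 : 0 <= cnorm xs := sqrtr_ge0 _.
  split => h.
    have : cnorm x ^+2 = (cnorm xs / s2)^+2 by rewrite h.
    rewrite cnorm_sq expr_div_n cnorm_sq hs2 => ->; lra.
  have Hsq : cnorm x ^+2 = (cnorm xs / s2)^+2.
    rewrite cnorm_sq expr_div_n cnorm_sq hs2 -h; lra.
  by move/eqP: Hsq; rewrite eqrXn2 // ?divr_ge0 // ?ltW // => /eqP.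
rewrite key; split.
  by case=> g1 [g2 g3]; split => //; apply/hprod0_iff.
by case=> /hprod0_iff [g1 g2] g3.
Qed.

Lemma e1_iff (xs x : C) :
  (exists c d : R, c^+2 + d^+2 = 1 /\ ofC x = c *: ofC xs + d *: bvec xs)
  <-> E1 xs x.
Proof.
rewrite /E1 /=; split.
  case=> c [d [hcd hx]].
  have [t [ht1 ht2]] : exists t : R, cos t = c /\ sin t = - d.
    by apply: cos_sin_ex; rewrite sqrrN.
  exists t; apply: ofC_inj; rewrite ofC_scale hx /= ht1 ht2.
  by rewrite scaleNr opprK.
case=> t ->; exists (cos t), (- sin t); split.
  by rewrite sqrrN cos2Dsin2.
by rewrite ofC_scale /= scaleNr.
Qed.

Lemma bessel (a b v : V) (hab : dot a b = 0) (hbb : dot b b = dot a a)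
  (hS : 0 < dot a a) : dot v a ^+ 2 + dot v b ^+ 2 <= dot a a * dot v v.
Proof.
have := dot_ge0 (dot a a *: v - dot v a *: a - dot v b *: b).
dotexp; rewrite hab hbb (dotC b a) hab (dotC a v) (dotC b v) => h.
nra.
Qed.

End S.

Unset Implicit Arguments.
Theorem mainTheorem2 (R : realType) (n : nat) (hn : (0 < n)%N)
    (xs : 'rV[R[i]]_n) (hxs : xs != 0) :
  (* (i) critical points *)
  (forall x : 'rV[R[i]]_n,
      gradient (greal xs) (ofC x) = 0 <-> (E1 xs `|` @E2 R n `|` E3 xs) x) /\
  (* (ii) second-order critical points *)
  (forall x : 'rV[R[i]]_n,
      (gradient (greal xs) (ofC x) = 0 /\ psd (hessian (greal xs) (ofC x)))
        <-> E1 xs x) /\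
  (* Hessian at 0 is negative definite *)
  negdef (hessian (greal xs) 0) /\
  (* second derivative in direction xs on E3 *)
  (forall x : 'rV[R[i]]_n, E3 xs x ->
      'D_(ofC xs) (fun z => 'D_(ofC xs) (greal xs) z) (ofC x)
        = - 2 * cnorm xs ^+ 4).
Proof.
set a := ofC xs; set b := bvec xs.
have hab : dot a b = 0 by exact: hab_ok.
have hba : dot b a = 0 by rewrite dotC.
have hbb : dot b b = dot a a by exact: hbb_ok.
have hS : 0 < dot a a.
  rewrite lt_def dot_ge0 andbT; apply/eqP => /dot_eq0 h.
  by move/eqP: hxs; apply; apply: ofC_inj; rewrite ofC0.
have Q_E23 : forall x, (ofC x = 0 \/ (dot (ofC x) a = 0 /\ dot (ofC x) b = 0 /\
      2 * dot (ofC x) (ofC x) = dot a a)) -> D2 a b (ofC x) a a = - 2 * dot a a ^+ 2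
      \/ D2 a b (ofC x) a a = - 4 * dot a a ^+ 2.
  move=> x [->|[h1 [h2 h3]]].
    by right; rewrite /D2 !dot0l hab; ring.
  by left; rewrite /D2 h1 hab; nra.
have part1 : forall x : 'rV[R[i]]_n,
      gradient (greal xs) (ofC x) = 0 <-> (E1 xs `|` @E2 R n `|` E3 xs) x.
  move=> x; rewrite gradE.
  have C := crit_char (ofC x) hab hbb hS.
  have e3 := e3_iff xs x. have e1 := e1_iff xs x.
  have e2 : ofC x = 0 <-> x = 0.
    by split => [h|->]; [apply: ofC_inj; rewrite h ofC0 | exact: ofC0].
  change (Wv a b (ofC x) = 0 <-> (E1 xs x \/ x = 0) \/ E3 xs x).
  tauto.
split; first exact: part1.
split.
  move=> x; split.
    case=> hg hpsd.
    move: hg; rewrite gradE crit_char // => -[h|[h|h]]; last by apply/e1_iff.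
      have := hpsd a; rewrite hessE quad_D2.
      by case: (Q_E23 x (or_introl h)) => ->; nra.
    have := hpsd a; rewrite hessE quad_D2.
    by case: (Q_E23 x (or_intror h)) => ->; nra.
  move=> hE1; split.
    by apply/part1; left; left.
  move/e1_iff: hE1 => [c [d [hcd Hy]]] v.
  rewrite hessE quad_D2 /D2.
  have hA : dot (ofC x) (ofC x) = dot a a.
    rewrite Hy; rewrite ?(dotDl, dotDr, dotZl, dotZr, dotNl, dotNr); rewrite hab hba hbb.
    transitivity ((c^+2 + d^+2) * dot a a); first ring. by rewrite hcd mul1r.
  rewrite hA.
  have := bessel v hab hbb hS.
  have := sqr_ge0 (dot (ofC x) v).
  move=> h1 h2. nra.
split.
  move=> v hv; rewrite hessE quad_D2 /D2 !dot0l.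
  have hv2 : 0 < dot v v.
    rewrite lt_def dot_ge0 andbT; apply/eqP => /dot_eq0 h.
    by rewrite h eqxx in hv.
  have := sqr_ge0 (dot v a); have := sqr_ge0 (dot v b); nra.
move=> x /e3_iff [h1 [h2 h3]].
rewrite dir2 cnorm4 /D2. rewrite -/a -/b h1 hab.
have -> : dot (ofC x) (ofC x) = dot a a / 2 by lra.
by field.
Qed.
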